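(* Let $n\ge 1$ and let $G_1=(s_1,\dots,s_{2n})$ and $G_2=(t_1,\dots,t_{2n})$ be ordered Gauss codes of alternating OGC knot diagrams with $n$ crossings, whose first halves are both equal to $(1,-2,3,-4,\dots,(-1)^{n+1}n)$. Let $G_1'=(s_{n+1},\dots,s_{2n})$ and $G_2'=(t_{n+1},\dots,t_{2n})$ be their second halves, and define the product as the concatenation $P=(s_{n+1},\dots,s_{2n},-t_{n+1},\dots,-t_{2n})$. Then $P$ can be transformed into an ordered Gauss code, i.e., the absolute values of the first $n$ entries of $P$ are $n$ distinct elements of $\{1,\dots,n\}$, so that after relabelling the crossings (applying a permutation of $\{1,\dots,n\}$ to absolute values, keeping signs) $P$ becomes a sequence of length $2n$ whose first $n$ entries have absolute values $1,2,\dots,n$ in order.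
   Context: A Gauss code of a knot diagram with $n$ crossings is a sequence of $2n$ nonzero integers obtained by choosing a base point and orientation, labelling the crossings by $1,\dots,n$, and recording the labels of the crossings met along the traversal, with sign indicating over- or under-passage; each label appears exactly twice, once with each sign. A Gauss code is ordered if the absolute values of its first $n$ entries are $1,2,\dots,n$ in this order. An OGC diagram is a knot diagram admitting an ordered Gauss code. *)

(* Defs.v *)
From mathcomp Require Import all_boot all_order all_algebra.
Set Implicit Arguments. Unset Strict Implicit. Unset Printing Implicit Defensive.
Import Order.TTheory GRing.Theory Num.Theory.
Local Open Scope ring_scope.

(* Combinatorial Gauss code with n crossings: a sequence of length 2n of
   integers, every entry has absolute value in {1,..,n}, and each label
   k in {1,..,n} appears exactly twice, once as +k (over) and once as -k
   (under). *)
Definition gauss_code (n : nat) (s : seq int) : Prop :=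
  [/\ size s = (2 * n)%N,
      all (fun x : int => (0 < `|x|)%N && (`|x| <= n)%N) s &
      forall k : nat, (0 < k <= n)%N ->
        count_mem (k%:Z) s = 1%N /\ count_mem (- k%:Z) s = 1%N].

Definition ordered_code (n : nat) (s : seq int) : Prop :=
  forall i : nat, (i < n)%N -> absz (nth 0 s i) = i.+1.

Definition alternating_code (s : seq int) : Prop :=
  forall i : nat, (i < size s)%N ->
    (0 < nth 0 s i) != (0 < nth 0 s ((i.+1) %% size s)).

Definition std_first_half (n : nat) : seq int :=
  [seq ((-1) ^+ i * (i.+1)%:Z) | i <- iota 0 n].

Definition relabel (sigma : nat -> nat) (s : seq int) : seq int :=
  [seq (if 0 <= x then (sigma `|x|%N)%:Z else - (sigma `|x|%N)%:Z) | x <- s].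

Definition is_relabelling (n : nat) (sigma : nat -> nat) : Prop :=
  (forall k : nat, (0 < k <= n)%N -> (0 < sigma k <= n)%N) /\
  (forall k l : nat, (0 < k <= n)%N -> (0 < l <= n)%N -> sigma k = sigma l -> k = l).

Definition gauss_product (n : nat) (G1 G2 : seq int) : seq int :=
  drop n G1 ++ [seq - x | x <- drop n G2].

(* Main.v *)
Require Import Defs.
From mathcomp Require Import all_boot all_order all_algebra.
From mathcomp Require Import zify.
Import Order.TTheory GRing.Theory Num.Theory.
Local Open Scope ring_scope.

Lemma std_abs n k : (0 < k <= n)%N ->
  count (fun x : int => `|x|%N == k) (std_first_half n) = 1%N.
Proof.
move=> hk; rewrite /std_first_half -(count_map absz (pred1 k)) -map_comp.
have -> : [seq (absz \o (fun i : nat => (-1) ^+ i * (i.+1)%:Z)) i | i <- iota 0 n]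
   = iota 1 n.
  rewrite (iotaDl 1 0) /=; apply: eq_map => i /=.
  by rewrite abszM abszX abszN /= exp1n mul1n.
by rewrite count_uniq_mem ?iota_uniq // mem_iota; apply/eqP; lia.
Qed.

Lemma drop_counts n G k : (0 < k <= n)%N -> gauss_code n G ->
  take n G = std_first_half n ->
  [/\ (count_mem (k%:Z) (drop n G) + count_mem (k%:Z) (std_first_half n) = 1)%N,
      (count_mem (- k%:Z) (drop n G) + count_mem (- k%:Z) (std_first_half n) = 1)%N &
      (count_mem (k%:Z) (std_first_half n) + count_mem (- k%:Z) (std_first_half n) = 1)%N].
Proof.
move=> hk [_ _ hc] ht; have [c1 c2] := hc k hk.
have e y : (count_mem y (drop n G) + count_mem y (std_first_half n) = count_mem y G)%N.
  by rewrite -ht addnC -count_cat cat_take_drop.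
split; [by rewrite e | by rewrite e|].
rewrite -count_predUI.
have -> : count (predI (pred1 (k%:Z)) (pred1 (- k%:Z))) (std_first_half n) = 0%N.
  apply/eqP; rewrite -leqn0 -(count_pred0 (std_first_half n)) sub_count // => x /=.
  by move/andP=> [/eqP -> /eqP]; lia.
rewrite addn0 -(@std_abs n k hk); apply: eq_count => x /=.
apply/orP/eqP; first by case=> /eqP ->; rewrite ?abszN.
by case: x => m /=; [move=> ->; left | move=> <-; right].
Qed.

Theorem theorem4 (n : nat) (G1 G2 : seq int) :
  (1 <= n)%N ->
  gauss_code n G1 -> alternating_code G1 -> take n G1 = std_first_half n ->
  gauss_code n G2 -> alternating_code G2 -> take n G2 = std_first_half n ->
  let P := gauss_product n G1 G2 in
  [/\ uniq [seq `|x|%N | x <- take n P],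
      all (fun x : int => (0 < `|x|)%N && (`|x| <= n)%N) (take n P) &
      exists sigma : nat -> nat,
        [/\ is_relabelling n sigma,
            gauss_code n (relabel sigma P) &
            ordered_code n (relabel sigma P)]].
Proof.
move=> hn g1 _ t1 g2 _ t2 P.
have s1 : size G1 = (2 * n)%N by case: g1.
have s2 : size G2 = (2 * n)%N by case: g2.
set A := drop n G1; set B := drop n G2.
have sA : size A = n by rewrite size_drop s1; lia.
have sB : size B = n by rewrite size_drop s2; lia.
have hP : P = A ++ map -%R B by [].
have tP : take n P = A by rewrite hP take_cat sA ltnn subnn take0 cats0.
have sP : size P = (2 * n)%N by rewrite hP size_cat size_map sA sB; lia.
pose inr (x : int) := (0 < `|x|)%N && (`|x| <= n)%N.
have allA : all inr A by case: g1 => _ h _; rewrite /A; apply/allP => x /mem_drop; apply/allP.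
have allP' : all inr P.
  rewrite hP all_cat allA /= all_map; case: g2 => _ h _; apply/allP => x /mem_drop hx.
  by rewrite /= /inr abszN; apply: (allP h).
pose a := map absz A.
have ca k : (0 < k <= n)%N -> count_mem k a = 1%N.
  move=> hk; have [x1 x2 x3] := @drop_counts n G1 k hk g1 t1.
  rewrite count_map.
  have -> : count (preim absz (pred1 k)) A = (count_mem (k%:Z) A + count_mem (- k%:Z) A)%N.
    rewrite -count_predUI.
    have -> : count (predI (pred1 (k%:Z)) (pred1 (- k%:Z))) A = 0%N.
      apply/eqP; rewrite -leqn0 -(count_pred0 A) sub_count // => x /=.
      by move/andP=> [/eqP -> /eqP]; lia.
    rewrite addn0; apply: eq_count => x /=.
    apply/eqP/orP; last by case=> /eqP ->; rewrite ?abszN.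
    by case: x => m /=; [move=> ->; left | move=> <-; right].
  rewrite -/A in x1 x2; lia.
have pa : perm_eq a (iota 1 n).
  apply/allP => x _ /=.
  case hx: (0 < x <= n)%N.
    by rewrite ca // count_uniq_mem ?iota_uniq // mem_iota; apply/eqP; lia.
  rewrite (count_uniq_mem _ (iota_uniq _ _)) mem_iota.
  have -> : (1 <= x < 1 + n)%N = false by lia.
  apply/eqP/count_memPn/negP => /mapP [z zA ez].
  by move: (allP allA z zA) hx; rewrite /inr -ez => ->.
have ua : uniq a by rewrite (perm_uniq pa) iota_uniq.
have ma k : (k \in a) = (0 < k <= n)%N by rewrite (perm_mem pa) mem_iota; lia.
have saz : size a = n by rewrite size_map.
pose sigma k := (index k a).+1.
have sig_rng k : (0 < k <= n)%N -> (0 < sigma k <= n)%N.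
  by move=> hk; rewrite /sigma /= -saz index_mem ma.
have sig_inj k l : (0 < k <= n)%N -> (0 < l <= n)%N -> sigma k = sigma l -> k = l.
  move=> hk hl [] e.
  by rewrite -(nth_index 0 (_ : k \in a)) ?ma // e nth_index // ma.
pose f (x : int) := if 0 <= x then (sigma `|x|%N)%:Z else - (sigma `|x|%N)%:Z.
have rel : relabel sigma P = map f P by [].
have absf x : absz (f x) = sigma `|x|%N by rewrite /f; case: ifP; rewrite ?abszN.
have finj x y : inr x -> inr y -> f x = f y -> x = y.
  case: x => [m|m]; case: y => [m'|m'] /andP [hx1 hx2] /andP [hy1 hy2];
    rewrite /f /=.
  - move=> e; have e' : sigma m = sigma m' by rewrite /sigma; case: e => ->.
    by rewrite (sig_inj _ _ _ _ e') //; apply/andP.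
  - move=> e; exfalso; have hy : (0 < m'.+1 <= n)%N by rewrite hy1 hy2.
    have := sig_rng _ hy; move: e; lia.
  - move=> e; exfalso; have hx : (0 < m.+1 <= n)%N by rewrite hx1 hx2.
    have := sig_rng _ hx; move: e; lia.
  - move/oppr_inj => e; have e' : sigma m.+1 = sigma m'.+1 by rewrite /sigma; case: e => ->.
    have hx : (0 < m.+1 <= n)%N by rewrite hx1 hx2.
    have hy : (0 < m'.+1 <= n)%N by rewrite hy1 hy2.
    by case: (sig_inj _ _ hx hy e') => ->.
have cP k : (0 < k <= n)%N ->
   count_mem (k%:Z) P = 1%N /\ count_mem (- k%:Z) P = 1%N.
  move=> hk; have [x1 x2 x3] := @drop_counts n G1 k hk g1 t1.
  have [y1 y2 y3] := @drop_counts n G2 k hk g2 t2.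
  rewrite -/A in x1 x2; rewrite -/B in y1 y2.
  rewrite hP !count_cat !count_map.
  have -> : count (preim -%R (pred1 (k%:Z))) B = count_mem (- k%:Z) B.
    by apply: eq_count => x /=; rewrite eqr_oppLR.
  have -> : count (preim -%R (pred1 (- k%:Z))) B = count_mem (k%:Z) B.
    by apply: eq_count => x /=; rewrite eqr_oppLR opprK.
  split; lia.
have cnt y : inr y -> count_mem (f y) (map f P) = count_mem y P.
  move=> hy; rewrite count_map; apply: eq_in_count => x xP /=.
  apply/eqP/eqP; last by move=> ->.
  by apply: finj => //; apply: (allP allP').
split.
- by rewrite tP.
- by rewrite tP.
exists sigma; split.
- by split.
- split.
  + by rewrite rel size_map.
  + rewrite rel all_map; apply/allP => x xP /=.
    by rewrite absf; apply: sig_rng; apply: (allP allP').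
  + move=> k hk.
    have hk1 : (k.-1 < size a)%N by rewrite saz; lia.
    set k' := nth 0%N a k.-1.
    have k'a : k' \in a by apply: mem_nth.
    have hk' : (0 < k' <= n)%N by rewrite -ma.
    have sk : sigma k' = k by rewrite /sigma index_uniq //; lia.
    have e1 : k%:Z = f (k'%:Z).
      by rewrite /f /= sk.
    have e2 : - k%:Z = f (- k'%:Z).
      rewrite /f abszN /= sk; case: ifP => //; lia.
    have [c1 c2] := cP k' hk'.
    rewrite rel e2 e1 !cnt //; rewrite /inr ?abszN //.
- move=> i hi; rewrite rel (nth_map 0); last by rewrite sP; lia.
  rewrite hP nth_cat sA hi absf /sigma.
  by rewrite -(nth_map 0 0%N absz) ?sA // index_uniq // saz.
Qed.
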